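(* Fix a sampler time $t\in(0,1]$, step size $\delta_t>0$, noise level $\sigma_t>0$, a state $x_t\in\mathbb{R}^d$ and context $c$. Let $\mu_t(v)=U_t+B_t v$ be the one-step mean as a function of a velocity $v\in\mathbb{R}^d$, where $U_t$ does not depend on $v$ and $B_t=-\delta_t-(1-t)\frac{\sigma_t^2\delta_t}{2t}$ is a scalar, and let $\Sigma_t$ be a fixed symmetric positive definite covariance. Let $v^{\mathrm{old}}\in\mathbb{R}^d$ be a fixed (rollout) velocity not depending on $\theta$, let $v_\theta=v_\theta(x_t,t,c)$ be a differentiable parametric velocity, let $\beta>0$, $\Delta v_\theta=v_\theta-v^{\mathrm{old}}$, $v^{\pm}_\theta=v^{\mathrm{old}}\pm\beta\Delta v_\theta$, $\mu^{\mathrm{old}}_t=\mu_t(v^{\mathrm{old}})$, $\mu^{\pm}_{\theta,t}=\mu_t(v^\pm_\theta)$. For an observed next state $x_{t^-}$ let $E^{\pm}_{\theta,t}=\|x_{t^-}-\mu^\pm_{\theta,t}\|^2_{\Sigma_t^{-1}}$, $e_t=x_{t^-}-\mu^{\mathrm{old}}_t$, $d_t=\mu^+_{\theta,t}-\mu^{\mathrm{old}}_t$. Let $r\in[0,1]$, $y=2r-1$, $z_t=\tfrac12 y(E^+_{\theta,t}-E^-_{\theta,t})$ and $\ell_t(\theta)=\mathrm{softplus}(z_t)$. (a) $E^+_{\theta,t}-E^-_{\theta,t}=-4\langle\Sigma_t^{-1}e_t,d_t\rangle$. (b) $-\nabla_\theta\ell_t(\theta)=2\beta\,\sigma(z_t)\,y\,\big(\tfrac{\partial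 v_\theta}{\partial\theta}\big)^\top B_t\Sigma_t^{-1}e_t$; in particular $-\nabla_\theta\ell_t(\theta)\propto\sigma(z_t)\,y\,\big(\tfrac{\partial v_\theta}{\partial\theta}\big)^\top B_t\Sigma_t^{-1}e_t$, where $\sigma$ is the logistic sigmoid. (c) Suppose now $x_{t^-}$ and $r$ are random given $(x_t,c)$, that $r=o\in\{0,1\}$ is a binary outcome with $\alpha(x_t,c)=\mathbb{P}(o=1\mid x_t,c)$, that $\mu^{\mathrm{old}}_t=\mathbb{E}[x_{t^-}\mid x_t,c]$, and define $\mu^{\pm}_t(x_t,c)=\mathbb{E}[x_{t^-}\mid x_t,c,o=1]$ resp. $\mathbb{E}[x_{t^-}\mid x_t,c,o=0]$ and $\Delta\mu^\star_t(x_t,c)=\mu^+_t-\mu^-_t$. In the small-update regime in which $\sigma(z_t)$ is treated as a constant (as when $v_\theta\approx v^{\mathrm{old}}$), the conditional expected update direction is parallel to the oracle mean gap direction: $$\mathbb{E}[-\nabla_\theta\ell_t(\theta)\mid x_t,c]\ \parallel\ \Big(\frac{\partial v_\theta}{\partial\theta}\Big)^\top B_t\Sigma_t^{-1}\Delta\mu^\star_t(x_t,c).$$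
   Context: $\|u\|^2_M=u^\top Mu$, $\langle\cdot,\cdot\rangle$ is the Euclidean inner product, $\mathrm{softplus}(z)=\log(1+e^z)$, $\sigma(z)=1/(1+e^{-z})$. Gradients with respect to $\theta$ treat $v^{\mathrm{old}}$, $\mu^{\mathrm{old}}_t$, $e_t$ and $x_{t^-}$ as constants. The affine mean arises from the Euler–Maruyama step of a flow-matching reverse SDE $x_{t^-}=x_t-\big[v+\frac{\sigma_t^2}{2t}(x_t+(1-t)v)\big]\delta_t+\sigma_t\sqrt{\delta_t}\,\epsilon$, $\epsilon\sim\mathcal{N}(0,I)$, with $t^-=t-\delta_t$; $U_t=(1-\frac{\sigma_t^2\delta_t}{2t})x_t$. ''Parallel'' means equal up to a (nonnegative) scalar factor. *)

(* Defs.v *)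
From HB Require Import structures.
From mathcomp Require Import all_boot all_order all_algebra.
From mathcomp Require Import all_classical all_reals all_analysis.
Set Implicit Arguments. Unset Strict Implicit. Unset Printing Implicit Defensive.
Import Order.TTheory GRing.Theory Num.Theory.
Import numFieldNormedType.Exports.
Local Open Scope classical_set_scope.
Local Open Scope ring_scope.

Section Defs.
Variable R : realType.

Definition softplus (z : R) : R := ln (1 + expR z).
Definition sigmoid (z : R) : R := (1 + expR (- z))^-1.

Definition inner {d : nat} (a b : 'cV[R]_d) : R := (a^T *m b) 0 0.
Definition sqnormM {d : nat} (M : 'M[R]_d) (u : 'cV[R]_d) : R := (u^T *m M *m u) 0 0.

Definition symmetric_pd {d : nat} (S : 'M[R]_d) : Prop :=
  S^T = S /\ forall u : 'cV[R]_d, u != 0 -> 0 < sqnormM S u.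

(* Euler-Maruyama coefficients of the flow-matching reverse SDE *)
Definition Bt (t dt sig : R) : R := - dt - (1 - t) * (sig ^+ 2 * dt / (2 * t)).
Definition Ut {d : nat} (t dt sig : R) (x : 'cV[R]_d) : 'cV[R]_d :=
  (1 - sig ^+ 2 * dt / (2 * t)) *: x.
Definition mut {d : nat} (t dt sig : R) (x v : 'cV[R]_d) : 'cV[R]_d :=
  Ut t dt sig x + Bt t dt sig *: v.

Definition vplus {d : nat} (beta : R) (vold vth : 'cV[R]_d) : 'cV[R]_d :=
  vold + beta *: (vth - vold).
Definition vminus {d : nat} (beta : R) (vold vth : 'cV[R]_d) : 'cV[R]_d :=
  vold - beta *: (vth - vold).

Definition Eplus {d : nat} (t dt sig beta : R) (Sig : 'M[R]_d)
  (x xm vold vth : 'cV[R]_d) : R :=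
  sqnormM (invmx Sig) (xm - mut t dt sig x (vplus beta vold vth)).
Definition Eminus {d : nat} (t dt sig beta : R) (Sig : 'M[R]_d)
  (x xm vold vth : 'cV[R]_d) : R :=
  sqnormM (invmx Sig) (xm - mut t dt sig x (vminus beta vold vth)).

Definition zt {d : nat} (t dt sig beta r : R) (Sig : 'M[R]_d)
  (x xm vold vth : 'cV[R]_d) : R :=
  2^-1 * (2 * r - 1) *
  (Eplus t dt sig beta Sig x xm vold vth - Eminus t dt sig beta Sig x xm vold vth).

Definition losst {d p : nat} (t dt sig beta r : R) (Sig : 'M[R]_d)
  (x xm vold : 'cV[R]_d) (v : 'cV[R]_p -> 'cV[R]_d) (th : 'cV[R]_p) : R :=
  softplus (zt t dt sig beta r Sig x xm vold (v th)).

Definition gradR {p : nat} (f : 'cV[R]_p -> R) (th : 'cV[R]_p) : 'cV[R]_p :=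
  \col_k ('D_(delta_mx k 0) f th).
Definition jacobian_col {d p : nat} (v : 'cV[R]_p -> 'cV[R]_d) (th : 'cV[R]_p)
  : 'M[R]_(d, p) :=
  \matrix_(i, k) (('D_(delta_mx k 0) v th) i 0).

Definition Evec {dT : measure_display} {T : measurableType dT} {d : nat}
  (P : probability T R) (X : T -> 'cV[R]_d) : 'cV[R]_d :=
  \col_i fine (\int[P]_w (X w i 0)%:E).
Definition Econd {dT : measure_display} {T : measurableType dT} {d : nat}
  (P : probability T R) (X : T -> 'cV[R]_d) (A : set T) : 'cV[R]_d :=
  (fine (P A))^-1 *: \col_i fine (\int[P]_(w in A) (X w i 0)%:E).

End Defs.

(* Main.v *)
Require Import Defs.
From HB Require Import structures.
From mathcomp Require Import all_boot all_order all_algebra.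
From mathcomp Require Import all_classical all_reals all_analysis.
From mathcomp Require Import ring lra.
Import Order.TTheory GRing.Theory Num.Theory.
Import numFieldNormedType.Exports.
Local Open Scope classical_set_scope.
Local Open Scope ring_scope.
Section A.
Variable R : realType.
Variable d : nat.
Implicit Types a b : 'cV[R]_d.

Lemma sqdiff (M : 'M[R]_d) a b : M^T = M ->
  sqnormM M (a - b) - sqnormM M (a + b) = -4 * inner (M *m a) b.
Proof.
move=> hM; rewrite /sqnormM /inner.
have hba : (b^T *m M *m a) 0 0 = (a^T *m M *m b) 0 0.
  have -> : b^T *m M *m a = (a^T *m M *m b)^T by rewrite !trmx_mul trmxK hM mulmxA.
  by rewrite mxE.
have hin : ((M *m a)^T *m b) 0 0 = (a^T *m M *m b) 0 0.
  by rewrite trmx_mul hM.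
rewrite hin !linearD /= !linearN /= ?mulmxDl ?mulmxDr ?mulmxNl ?mulmxNr ?mulmxBl ?mulmxBr ?mulmxDl ?mulmxDr ?mulmxNl ?mulmxNr ?mulNmx ?mulmxN.
set p1 := a^T *m M *m a; set p2 := a^T *m M *m b; set p3 := b^T *m M *m a; set p4 := b^T *m M *m b.
move: hba; rewrite !mxE => ->.
ring.
Qed.
End A.
Section B.
Variable R : realType.
Variable d : nat.

Lemma mutB (t dt sig : R) (x y z : 'cV[R]_d) :
  mut t dt sig x y - mut t dt sig x z = Bt t dt sig *: (y - z).
Proof. by rewrite /mut opprD addrACA subrr add0r scalerBr. Qed.

Lemma subsub (a b c : 'cV[R]_d) : a - b = (a - c) - (b - c).
Proof. by rewrite opprB addrA subrK. Qed.

Lemma partA (t dt sig beta : R) (Sig : 'M[R]_d) (x xm vold vth : 'cV[R]_d) :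
  Sig^T = Sig ->
  Eplus t dt sig beta Sig x xm vold vth - Eminus t dt sig beta Sig x xm vold vth
  = - 4 * inner (invmx Sig *m (xm - mut t dt sig x vold))
                (mut t dt sig x (vplus beta vold vth) - mut t dt sig x vold).
Proof.
move=> hS; have hM : (invmx Sig)^T = invmx Sig by rewrite trmx_inv hS.
rewrite /Eplus /Eminus -sqdiff //.
rewrite [xm - mut _ _ _ _ (vplus _ _ _)](subsub _ _ (mut t dt sig x vold)).
rewrite [xm - mut _ _ _ _ (vminus _ _ _)](subsub _ _ (mut t dt sig x vold)).
rewrite !mutB /vplus /vminus.
rewrite [vold + _ - vold]addrC addKr [vold - _ - vold]addrC addKr.
by rewrite scalerN opprK.
Qed.
End B.
Section C.
Variable R : realType.
Context {dT : measure_display} {T : measurableType dT}.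
Variable P : probability T R.

Lemma Rint_sum (I : Type) (s : seq I) (F : I -> T -> R) :
  (forall i, P.-integrable setT (EFin \o F i)) ->
  Rintegral P setT (fun w => \sum_(i <- s) F i w) =
  \sum_(i <- s) Rintegral P setT (F i).
Proof.
move=> hF; elim: s => [|i s ih].
  rewrite big_nil; under eq_Rintegral do rewrite big_nil.
  by rewrite Rintegral_cst ?mul0r...
rewrite big_cons; under eq_Rintegral do rewrite big_cons.
rewrite RintegralD //; [by rewrite ih|].
have -> : EFin \o (fun w => \sum_(j <- s) F j w) = fun w => \sum_(j <- s) (F j w)%:E.
  by apply/funext => w /=; rewrite sumEFin.
by apply: integrable_sum => //= j _; exact: hF.
Qed.

Lemma Evec_mul (d q : nat) (G : 'M[R]_(q, d)) (Y : T -> 'cV[R]_d) :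
  (forall i, P.-integrable setT (fun w => (Y w i 0)%:E)) ->
  Evec P (fun w => G *m Y w) = G *m Evec P Y.
Proof.
move=> hY; apply/matrixP => k j; rewrite !mxE.
have -> : fine (\int[P]_w ((G *m Y w) k 0)%:E) =
   Rintegral P setT (fun w => \sum_i (fun i w => G k i * Y w i 0) i w).
  by congr fine; apply: eq_integral => w _; rewrite !mxE.
rewrite Rint_sum; last first.
  move=> i; have := integrableZl measurableT (G k i) (hY i).
  by apply: eq_integrable => // w _ /=; rewrite EFinM.
apply: eq_bigr => i _; rewrite !mxE RintegralZl //; exact: hY.
Qed.
End C.
Lemma auxb (R : realType) (b : bool) (c0 y : R) :
  c0 * (2 * b%:R - 1) * y = c0 * (2 * (if b then y else 0) - y).
Proof. by case: b => /=; ring. Qed.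

Section D.
Variable R : realType.
Context {dT : measure_display} {T : measurableType dT}.
Variable P : probability T R.

Lemma intZ (D : set T) (f : T -> R) (k : R) : measurable D ->
  P.-integrable D (EFin \o f) -> P.-integrable D (EFin \o (fun w => k * f w)).
Proof.
move=> mD hf; have := integrableZl mD k hf.
by apply: eq_integrable => // w _ /=; rewrite EFinM.
Qed.

Lemma intB (D : set T) (f h : T -> R) : measurable D ->
  P.-integrable D (EFin \o f) -> P.-integrable D (EFin \o h) ->
  P.-integrable D (EFin \o (fun w => f w - h w)).
Proof.
move=> mD hf hh; have := integrableB mD hf hh.
by apply: eq_integrable => // w _ /=; rewrite EFinB.
Qed.

Lemma coordC (d : nat) (X : T -> 'cV[R]_d) (o : T -> bool) (m : 'cV[R]_d) (i : 'I_d) (c0 : R) :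
  measurable [set w | o w] ->
  P.-integrable setT (fun w => (X w i 0)%:E) ->
  0 < fine (P [set w | o w]) < 1 ->
  m = Evec P X ->
  Rintegral P setT (fun w => c0 * (2 * (o w)%:R - 1) * (X w i 0 - m i 0))
  = (2 * c0 * fine (P [set w | o w]) * (1 - fine (P [set w | o w]))) *
    (Econd P X [set w | o w] i 0 - Econd P X [set w | ~~ o w] i 0).
Proof.
move=> mA hX /andP[p0 p1] hm.
set A := [set w | o w]; set p := fine (P A).
set f := fun w => X w i 0.
have hf : P.-integrable setT (EFin \o f) by [].
set g := fun w => f w - m i 0.
have hc : forall (D : set T) (k : R), measurable D -> P.-integrable D (EFin \o cst k).
  by move=> D k mD; exact: finite_measure_integrable_cst.
have hg : P.-integrable setT (EFin \o g).
  by apply: (integrableB measurableT hf (hc _ _ measurableT)).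
have hgA : P.-integrable setT (EFin \o (g \_ A)).
  rewrite -restrict_EFin; apply/(integrable_mkcond _ mA).
  exact: integrableS hg.
have hfA : P.-integrable A (EFin \o f) by exact: integrableS hf.
have hpt : forall w, c0 * (2 * (o w)%:R - 1) * (X w i 0 - m i 0)
                     = c0 * (2 * (g \_ A) w - g w).
  move=> w; rewrite /patch /g /f.
  have -> : (w \in A) = o w by apply/idP/idP => [/set_mem|/mem_set].
  exact: auxb.
under eq_Rintegral do rewrite hpt.
rewrite RintegralZl //; last by apply: intB => //; apply: intZ.
rewrite RintegralB //; last by apply: intZ.
rewrite RintegralZl // -Rintegral_mkcond.
have hmi : m i 0 = Rintegral P setT f by rewrite hm mxE.
have hT : Rintegral P setT g = 0.
  rewrite /g RintegralB //; last exact: hc.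
  rewrite Rintegral_cst // (_ : fine _ = 1); last exact: (congr1 fine (probability_setT P)).
  by rewrite mulr1 -hmi subrr.
have hAg : Rintegral P A g = Rintegral P A f - m i 0 * p.
  by rewrite /g RintegralB // ?Rintegral_cst //; exact: hc.
have hB : [set w | ~~ o w] = ~` A.
  by apply/seteqP; split => w /=; move/negP.
have hPA : P A = p%:E by rewrite /p fineK // fin_num_measure.
have hPB : fine (P (~` A)) = 1 - p.
  by rewrite probability_setC // hPA -EFinB.
have hfB : Rintegral P (~` A) f = Rintegral P setT f - Rintegral P A f.
  rewrite -(setUCr A) Rintegral_setU //; first by rewrite addrC addKr.
  - exact: measurableC.
  - by rewrite setUCr.
  - by rewrite disj_set2E setICr.
rewrite hT hAg subr0 /Econd hB !mxE hPB.
rewrite -/(Rintegral P A f) -/(Rintegral P (~` A) f) hfB -hmi -/p.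
have hp0 : p != 0 by rewrite gt_eqF.
have hq0 : 1 - p != 0 by rewrite subr_eq0 eq_sym lt_eqF.
field.
by rewrite hq0 hp0.
Qed.
End D.
Section E.
Variable R : realType.
Context {dT : measure_display} {T : measurableType dT}.
Variable P : probability T R.

Lemma intY (d : nat) (X : T -> 'cV[R]_d) (o : T -> bool) (m : 'cV[R]_d) (i : 'I_d) (c0 : R) :
  measurable [set w | o w] ->
  P.-integrable setT (fun w => (X w i 0)%:E) ->
  P.-integrable setT (EFin \o (fun w => c0 * (2 * (o w)%:R - 1) * (X w i 0 - m i 0))).
Proof.
move=> mA hX.
set A := [set w | o w].
set f := fun w => X w i 0.
have hf : P.-integrable setT (EFin \o f) by [].
set g := fun w => f w - m i 0.
have hc : forall (D : set T) (k : R), measurable D -> P.-integrable D (EFin \o cst k).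
  by move=> D k mD; exact: finite_measure_integrable_cst.
have hg : P.-integrable setT (EFin \o g).
  by apply: (integrableB measurableT hf (hc _ _ measurableT)).
have hgA : P.-integrable setT (EFin \o (g \_ A)).
  rewrite -restrict_EFin; apply/(integrable_mkcond _ mA).
  exact: integrableS hg.
have hpt : forall w, c0 * (2 * (o w)%:R - 1) * (X w i 0 - m i 0)
                     = c0 * (2 * (g \_ A) w - g w).
  move=> w; rewrite /patch /g /f.
  have -> : (w \in A) = o w by apply/idP/idP => [/set_mem|/mem_set].
  exact: auxb.
have := @intZ R dT T P setT _ c0 measurableT
  (@intB R dT T P setT _ _ measurableT (@intZ R dT T P setT _ 2 measurableT hgA) hg).
by apply: eq_integrable => // w _ /=; rewrite hpt.
Qed.

Lemma partC (d p : nat) (J : 'M[R]_(d, p)) (B beta s : R) (M : 'M[R]_d)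
  (X : T -> 'cV[R]_d) (o : T -> bool) (m : 'cV[R]_d) :
  measurable [set w | o w] ->
  (forall i, P.-integrable setT (fun w => (X w i 0)%:E)) ->
  0 < fine (P [set w | o w]) < 1 ->
  m = Evec P X -> 0 < beta -> 0 < s ->
  exists2 lam : R, 0 <= lam &
    Evec P (fun w => (2 * beta * s * (2 * (o w)%:R - 1))
         *: (J^T *m (B *: (M *m (X w - m)))))
    = lam *: (J^T *m (B *: (M *m
        (Econd P X [set w | o w] - Econd P X [set w | ~~ o w])))).
Proof.
move=> mA hX hp hm hb hs.
have /andP[p0 p1] := hp.
set p0' := fine (P [set w | o w]).
exists (2 * (2 * beta * s) * p0' * (1 - p0')).
  by rewrite !mulr_ge0 // ?subr_ge0 ltW.
set G := J^T *m (B *: M).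
have hL : forall (k : R) (Y : 'cV[R]_d), k *: (J^T *m (B *: (M *m Y))) = G *m (k *: Y).
  by move=> k Y; rewrite /G -mulmxA -scalemxAl !scalemxAr !scalerA mulrC.
under eq_fun do rewrite hL.
rewrite hL Evec_mul; last first.
  move=> i; have := @intY d X o m i (2 * beta * s) mA (hX i).
  by apply: eq_integrable => // w _ /=; rewrite !mxE.
congr (G *m _); apply/matrixP => i j; rewrite ord1.
rewrite [RHS]mxE.
rewrite (_ : (Econd P X [set w | o w] - Econd P X [set w | ~~ o w]) i 0 = Econd P X [set w | o w] i 0 - Econd P X [set w | ~~ o w] i 0); last by rewrite !mxE.
rewrite -(@coordC R dT T P d X o m i (2 * beta * s) mA (hX i) hp hm) [LHS]mxE.
by congr fine; apply: eq_integral => w _; rewrite !mxE.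
Qed.
End E.
Section F.
Variable R : realType.

Lemma D1 (V W : normedModType R) (f : V -> W) (x u : V) :
  'D_u f x = 'D_1 (fun h : R => f (h *: u + x)) 0.
Proof.
rewrite /derive; set g1 := fun h => h^-1 *: _; set g2 := fun h => h^-1 *: _.
suff -> : g1 = g2 by [].
by rewrite funeqE /g1 /g2 => h /=; rewrite addr0 scale0r add0r [_%:A]mulr1.
Qed.

Lemma chain (V : normedModType R) (g : V -> R) (F : R -> R) (x u : V) (dg a : R) :
  is_derive x u g dg -> is_derive (g x) 1 F a -> is_derive x u (F \o g) (a * dg).
Proof.
move=> [hg hgv] hF.
set G := fun h : R => g (h *: u + x).
have hG : is_derive (0:R) (1:R) G dg.
  apply: (@DeriveDef _ _ _ _ _ G); first exact: ((derivable1P g x u).1 hg).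
  by rewrite -hgv (@D1 _ _ g x u).
have hG0 : G 0 = g x by rewrite /G scale0r add0r.
rewrite -hG0 in hF.
have hc := is_derive1_comp hF hG.
case: hc => hcd hcv.
apply: (@DeriveDef _ _ _ _ _ (F \o g)); first exact: ((derivable1P (F \o g) x u).2 hcd).
by rewrite (@D1 _ _ (F \o g) x u).
Qed.

Lemma softplus_derive (z : R) : is_derive z 1 (@softplus R) (sigmoid z).
Proof.
have h1 : is_derive z 1 (fun y : R => 1 + expR y) (0 + expR z).
  exact: is_deriveD.
have hpos : 0 < 1 + expR z by rewrite addr_gt0 // expR_gt0.
have h2 := is_derive1_ln hpos.
have := @is_derive1_comp _ (@ln R) (fun y : R => 1 + expR y) z _ _ h2 h1.
have -> : @softplus R = (@ln R) \o (fun y => 1 + expR y) by apply/funext.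
move=> h; apply: (is_derive_eq h).
rewrite /sigmoid.
rewrite add0r expRN.
have he : expR z != 0 by rewrite gt_eqF // expR_gt0.
have he1 : 1 + expR z != 0 by rewrite gt_eqF.
field.
by rewrite he addrC he1.
Qed.
End F.
Section G.
Variable R : realType.

Lemma lin_derive (p d : nat) (v : 'cV[R]_p -> 'cV[R]_d) (th u : 'cV[R]_p) (w : 'cV[R]_d) (K c0 : R) :
  differentiable v th ->
  is_derive th u (fun t => K * (\sum_(i < d) w i 0 * v t i 0 - c0))
                 (K * \sum_(i < d) w i 0 * ('D_u v th) i 0).
Proof.
move=> hdv; have hv : derivable v th u by exact: diff_derivable.
have hf : forall i, is_derive th u (fun t => v t i 0) (('D_u v th) i 0).
  move=> i; rewrite derive_mx // mxE; apply: derivableP.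
  exact: ((derivable_mxP _ _ _).1 hv i 0).
have hs : is_derive th u (\sum_(i < d) (fun t => w i 0 * v t i 0))
                         (\sum_(i < d) w i 0 * ('D_u v th) i 0).
  apply: is_derive_sum => i; exact: (is_deriveZ (w i 0) (hf i)).
have e : (fun t => K * (\sum_(i < d) w i 0 * v t i 0 - c0)) =
         K \*: ((\sum_(i < d) (fun t => w i 0 * v t i 0)) - cst c0).
  by apply/funext => t /=; rewrite fct_sumE.
have := (is_deriveZ K (is_deriveB hs (is_derive_cst c0 th u))).
rewrite -e => h; apply: (is_derive_eq h).
by rewrite subr0.
Qed.
End G.
Section H.
Variable R : realType.

Lemma inner_sum (d : nat) (w a : 'cV[R]_d) : inner w a = \sum_(i < d) w i 0 * a i 0.
Proof. by rewrite /inner mxE; apply: eq_bigr => i _; rewrite mxE. Qed.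

Lemma innerZ (d : nat) (w a : 'cV[R]_d) (c : R) : inner w (c *: a) = c * inner w a.
Proof. by rewrite /inner -scalemxAr mxE. Qed.

Lemma innerB (d : nat) (w a b : 'cV[R]_d) : inner w (a - b) = inner w a - inner w b.
Proof. by rewrite /inner mulmxBr !mxE. Qed.

Lemma fin_aux (s y B be a b : R) :
  - (s * (2^-1 * y * (-4) * (B * be) * (a * b))) = 2 * be * s * y * (b * (B * a)).
Proof. by field. Qed.

Lemma zt_eq (d : nat) (t dt sig beta r : R) (Sig : 'M[R]_d) (x xm vold vth : 'cV[R]_d) :
  Sig^T = Sig ->
  zt t dt sig beta r Sig x xm vold vth =
  (2^-1 * (2 * r - 1) * (-4) * (Bt t dt sig * beta)) *
  (\sum_(i < d) (invmx Sig *m (xm - mut t dt sig x vold)) i 0 * vth i 0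
   - \sum_(i < d) (invmx Sig *m (xm - mut t dt sig x vold)) i 0 * vold i 0).
Proof.
move=> hS; rewrite /zt partA // mutB /vplus [vold + _]addrC addrK.
rewrite scalerA innerZ innerB !inner_sum.
set a := \sum_(i < d) _; set b := \sum_(i < d) _.
ring.
Qed.

Lemma partB (d p : nat) (t dt sig beta : R) (x : 'cV[R]_d) (Sig : 'M[R]_d)
  (vold : 'cV[R]_d) (v : 'cV[R]_p -> 'cV[R]_d) :
  Sig^T = Sig -> (forall th, differentiable v th) ->
  forall (th : 'cV[R]_p) (xm : 'cV[R]_d) (r : R),
     - gradR (losst t dt sig beta r Sig x xm vold v) th
     = (2 * beta * sigmoid (zt t dt sig beta r Sig x xm vold (v th)) * (2 * r - 1))
       *: ((jacobian_col v th)^T *m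
           (Bt t dt sig *: (invmx Sig *m (xm - mut t dt sig x vold)))).
Proof.
move=> hS hv th xm r.
set w := invmx Sig *m (xm - mut t dt sig x vold).
set K := 2^-1 * (2 * r - 1) * (-4) * (Bt t dt sig * beta).
set c0 := \sum_(i < d) w i 0 * vold i 0.
set g := fun t0 => K * (\sum_(i < d) w i 0 * v t0 i 0 - c0).
have hF : losst t dt sig beta r Sig x xm vold v = (@softplus R) \o g.
  by apply/funext => t0; rewrite /losst /= zt_eq.
have hz : zt t dt sig beta r Sig x xm vold (v th) = g th by rewrite zt_eq.
apply/matrixP => k j; rewrite ord1 hF hz !mxE.
have hd := @chain R _ _ _ _ _ _ _ (@lin_derive R p d v th (delta_mx k 0) w K c0 (hv th)) (@softplus_derive R (g th)).
rewrite (@derive_val _ _ _ _ _ _ _ hd).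
rewrite !mulr_sumr -sumrN; apply: eq_bigr => i _; rewrite !mxE /K.
exact: fin_aux.
Qed.
End H.
Theorem theorem4p4 (R : realType) (d p : nat) (t dt sig beta : R)
  (x : 'cV[R]_d) (Sig : 'M[R]_d) (vold : 'cV[R]_d)
  (v : 'cV[R]_p -> 'cV[R]_d) :
  0 < t <= 1 -> 0 < dt -> 0 < sig -> 0 < beta ->
  symmetric_pd Sig ->
  (forall th, differentiable v th) ->
  (* (a) *)
  (forall (th : 'cV[R]_p) (xm : 'cV[R]_d),
     Eplus t dt sig beta Sig x xm vold (v th)
     - Eminus t dt sig beta Sig x xm vold (v th)
     = - 4 * inner (invmx Sig *m (xm - mut t dt sig x vold))
                   (mut t dt sig x (vplus beta vold (v th)) - mut t dt sig x vold))
  /\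
  (* (b) *)
  (forall (th : 'cV[R]_p) (xm : 'cV[R]_d) (r : R), 0 <= r <= 1 ->
     - gradR (losst t dt sig beta r Sig x xm vold v) th
     = (2 * beta * sigmoid (zt t dt sig beta r Sig x xm vold (v th)) * (2 * r - 1))
       *: ((jacobian_col v th)^T *m
           (Bt t dt sig *: (invmx Sig *m (xm - mut t dt sig x vold)))))
  /\
  (* (c) small-update regime: sigma(z_t) frozen to a constant s > 0 *)
  (forall (dT : measure_display) (T : measurableType dT) (P : probability T R)
          (X : T -> 'cV[R]_d) (o : T -> bool) (th : 'cV[R]_p) (s : R),
     measurable [set w | o w] ->
     (forall i, P.-integrable setT (fun w => (X w i 0)%:E)) ->
     0 < fine (P [set w | o w]) < 1 ->
     mut t dt sig x vold = Evec P X ->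
     0 < s ->
     exists2 lam : R, 0 <= lam &
       Evec P (fun w =>
         (2 * beta * s * (2 * (o w)%:R - 1))
         *: ((jacobian_col v th)^T *m
             (Bt t dt sig *: (invmx Sig *m (X w - mut t dt sig x vold)))))
       = lam *: ((jacobian_col v th)^T *m
                 (Bt t dt sig *: (invmx Sig *m
                   (Econd P X [set w | o w] - Econd P X [set w | ~~ o w]))))).
Proof.


move=> ht hdt hsig hb [hS _] hv; split; [|split].
- by move=> th xm; exact: partA.
- by move=> th xm r _; exact: partB.
- move=> dT T P X o th s mA hX hp hm hs.
  exact: partC.
Qed.
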